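(* If a system $C=(1,c_2,c_3,c_4,c_5,c_6)$ is canonical and its subsystem $(1,c_2,c_3,c_4,c_5)$ is noncanonical, then $c_6\ne 2c_5-c_4$.
   Context: A system is a tuple $C=(c_1,\dots,c_n)$ of integers with $1=c_1<c_2<\dots<c_n$; for $k\le n$, $(c_1,\dots,c_k)$ is a subsystem. For a positive integer $v$, $\mathrm{opt}_C(v)$ is the minimum of $\sum_i x_i$ over $x\in\mathbb{Z}_{\ge0}^n$ with $\sum_i c_ix_i=v$. The greedy representation of $v$ is produced by: for $i=n$ down to $1$, while $c_i\le$ remaining value, take a coin $c_i$. $\mathrm{grd}_C(v)$ is its number of coins. A positive integer $w$ is a counterexample if $\mathrm{opt}_C(w)<\mathrm{grd}_C(w)$; $C$ is canonical if it has none, noncanonical otherwise. *)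

(* Defs.v *)
From mathcomp Require Import all_boot.
Set Implicit Arguments. Unset Strict Implicit. Unset Printing Implicit Defensive.

Definition is_system (C : seq nat) : Prop :=
  head 0 C = 1 /\ sorted ltn C.

Definition rep_value (C x : seq nat) : nat :=
  \sum_(i < size C) nth 0 C i * nth 0 x i.

Definition rep_coins (x : seq nat) : nat := \sum_(i < size x) nth 0 x i.

(* Greedy: coins from the largest down; for coin c>0 the loop
   "while c <= remaining, take c" takes exactly (rem %/ c) coins. *)
Fixpoint grd_aux (cs : seq nat) (v : nat) : nat :=
  match cs with
  | [::] => 0
  | c :: cs' => v %/ c + grd_aux cs' (v %% c)
  end.

Definition grd (C : seq nat) (v : nat) : nat := grd_aux (rev C) v.

(* opt_C(w) < grd_C(w): some representation of w uses fewer coins than greedy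
   (opt is the minimum over representations, so this is exactly opt < grd). *)
Definition counterexample (C : seq nat) (w : nat) : Prop :=
  0 < w /\
  exists x : seq nat, size x = size C /\ rep_value C x = w /\
                      rep_coins x < grd C w.

Definition canonical (C : seq nat) : Prop := forall w, ~ counterexample C w.

(* Main.v *)
Require Import Defs.
From mathcomp Require Import all_boot.
From mathcomp Require Import zify.

Definition hide (P : Prop) := P.

Lemma gstep c cs v : 0 < c -> c <= v ->
  grd_aux (c :: cs) v = (grd_aux (c :: cs) (v - c)).+1.
Proof.
move=> c0 cv /=; move: (subnK cv); move: (v - c) => u <-.
by rewrite divnDr ?dvdnn // divnn c0 modnDr addn1.
Qed.

Lemma glt c cs v : v < c -> grd_aux (c :: cs) v = grd_aux cs v.
Proof. by move=> h /=; rewrite divn_small // modn_small. Qed.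

Lemma g0 cs v : 1 \in cs -> grd_aux cs v = 0 -> v = 0.
Proof.
elim: cs v => //= c cs IH v; rewrite inE => /orP[/eqP <-|h].
  by rewrite divn1 => /eqP; rewrite addn_eq0 => /andP[/eqP -> _].
move/eqP; rewrite addn_eq0 => /andP[/eqP q0 /eqP r0].
by rewrite (divn_eq v c) q0 (IH _ h r0).
Qed.

Theorem lemma6 (c2 c3 c4 c5 c6 : nat) :
  is_system [:: 1; c2; c3; c4; c5; c6] ->
  canonical [:: 1; c2; c3; c4; c5; c6] ->
  ~ canonical [:: 1; c2; c3; c4; c5] ->
  c6 <> 2 * c5 - c4.
Proof.
move=> [_ /=] /andP[h12 /andP[h23 /andP[h34 /andP[h45 /andP[h56 _]]]]] canC ncan Hc6.
pose H := grd_aux [:: c5; c4; c3; c2; 1].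
pose H4 := grd_aux [:: c4; c3; c2; 1].
pose G := grd_aux [:: c6; c5; c4; c3; c2; 1].
have HS5 v : c5 <= v -> H v = (H (v - c5)).+1 by move=> h; rewrite /H gstep //; lia.
have HL5 v : v < c5 -> H v = H4 v by move=> h; rewrite /H glt.
have H4S v : c4 <= v -> H4 v = (H4 (v - c4)).+1 by move=> h; rewrite /H4 gstep //; lia.
have GS v : c6 <= v -> G v = (G (v - c6)).+1 by move=> h; rewrite /G gstep //; lia.
have GL v : v < c6 -> G v = H v by move=> h; rewrite /G glt.
have H0 : H 0 = 0 by rewrite /H /= !mod0n !div0n.
have G0 : G 0 = 0 by rewrite /G /= !mod0n !div0n.
have Hrep v : exists y1 y2 y3 y4 y5,
    y1 + c2 * y2 + c3 * y3 + c4 * y4 + c5 * y5 = v /\ y1 + y2 + y3 + y4 + y5 = H v.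
  exists (v %% c5 %% c4 %% c3 %% c2), (v %% c5 %% c4 %% c3 %/ c2),
    (v %% c5 %% c4 %/ c3), (v %% c5 %/ c4), (v %/ c5).
  rewrite /H /= divn1 addn0; split; last by lia.
  move: (divn_eq v c5) (divn_eq (v %% c5) c4) (divn_eq (v %% c5 %% c4) c3)
    (divn_eq (v %% c5 %% c4 %% c3) c2).
  move: (v %% c5 %% c4 %% c3 %% c2) (v %% c5 %% c4 %% c3 %/ c2) (v %% c5 %% c4 %/ c3)
    (v %% c5 %/ c4) (v %/ c5) => r1 q2 q3 q4 q5.
  move: (v %% c5 %% c4 %% c3) (v %% c5 %% c4) (v %% c5) => r2 r3 r4.
  lia.
have Grep v : exists y1 y2 y3 y4 y5 y6,
    y1 + c2 * y2 + c3 * y3 + c4 * y4 + c5 * y5 + c6 * y6 = v /\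
    y1 + y2 + y3 + y4 + y5 + y6 = G v.
  have [y1 [y2 [y3 [y4 [y5 [e1 e2]]]]]] := Hrep (v %% c6).
  exists y1, y2, y3, y4, y5, (v %/ c6).
  rewrite /G /=; rewrite /H /= in e2.
  move: (divn_eq v c6); move: e1 e2; move: (v %% c6) (v %/ c6) => r q.
  lia.
have canG y1 y2 y3 y4 y5 y6 V S :
    y1 + c2 * y2 + c3 * y3 + c4 * y4 + c5 * y5 + c6 * y6 = V ->
    y1 + y2 + y3 + y4 + y5 + y6 = S -> G V <= S.
  move=> eV eS; case: (posnP V) => [->|V0]; first by rewrite G0.
  rewrite leqNgt; apply/negP => lt; apply: (canC V); split => //.
  exists [:: y1; y2; y3; y4; y5; y6]; split => //; split.
    by rewrite /rep_value /= !big_ord_recr big_ord0 /=; lia.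
  have -> : grd [:: 1; c2; c3; c4; c5; c6] V = G V by [].
  by rewrite /rep_coins /= !big_ord_recr big_ord0 /=; lia.
have addG y1 y2 y3 y4 y5 y6 b :
    (b = 1 \/ b = c2 \/ b = c3 \/ b = c4 \/ b = c5 \/ b = c6) ->
    G (y1 + c2 * y2 + c3 * y3 + c4 * y4 + c5 * y5 + c6 * y6 + b)
      <= (y1 + y2 + y3 + y4 + y5 + y6).+1.
  case=> [->|[->|[->|[->|[->|->]]]]].
  - by apply: (canG y1.+1 y2 y3 y4 y5 y6); lia.
  - by apply: (canG y1 y2.+1 y3 y4 y5 y6); lia.
  - by apply: (canG y1 y2 y3.+1 y4 y5 y6); lia.
  - by apply: (canG y1 y2 y3 y4.+1 y5 y6); lia.
  - by apply: (canG y1 y2 y3 y4 y5.+1 y6); lia.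
  - by apply: (canG y1 y2 y3 y4 y5 y6.+1); lia.
have Gsub v a : (a = 1 \/ a = c2 \/ a = c3 \/ a = c4 \/ a = c5 \/ a = c6) ->
    a <= v -> G v <= (G (v - a)).+1.
  move=> ha av.
  have [y1 [y2 [y3 [y4 [y5 [y6 [e1 e2]]]]]]] := Grep (v - a).
  have := addG y1 y2 y3 y4 y5 y6 a ha.
  by rewrite e1 e2 subnK.
have H1char v : v < c4 -> H v <= 1 -> [\/ v = 0, v = 1, v = c2 | v = c3].
  move=> v4; rewrite HL5; last by lia.
  rewrite /H4 glt //.
  case: (leqP c3 v) => v3.
    rewrite gstep; try lia. rewrite ltnS leqn0 => /eqP h.
    have := g0 [:: c3; c2; 1] (v - c3) ltac:(by rewrite !inE eqxx !orbT) h.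
    by move=> h'; apply: Or44; lia.
  rewrite glt //; case: (leqP c2 v) => v2.
    rewrite gstep; try lia. rewrite ltnS leqn0 => /eqP h.
    have := g0 [:: c2; 1] (v - c2) ltac:(by rewrite !inE eqxx !orbT) h.
    by move=> h'; apply: Or43; lia.
  rewrite glt //= divn1 addn0 => v1.
  by case: v v1 {v2 v3 v4} => [|[|]] //; [constructor 1 | constructor 2].
apply: ncan.
have main : forall w x1 x2 x3 x4 x5,
    x1 + c2 * x2 + c3 * x3 + c4 * x4 + c5 * x5 = w -> 0 < w ->
    H w <= x1 + x2 + x3 + x4 + x5.
  elim/ltn_ind => w IH x1 x2 x3 x4 x5 ew w0.
  rewrite leqNgt; apply/negP => Hlt.
  have IHr u y1 y2 y3 y4 y5 : y1 + c2 * y2 + c3 * y3 + c4 * y4 + c5 * y5 = u ->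
      u < w -> H u <= y1 + y2 + y3 + y4 + y5.
    move=> eu uw; case: (posnP u) => [->|u0]; first by rewrite H0.
    exact: (IH u uw).
  have Hsub v a : (a = 1 \/ a = c2 \/ a = c3 \/ a = c4 \/ a = c5) -> a <= v -> v < w ->
      H v <= (H (v - a)).+1.
    move=> ha av vw.
    have [y1 [y2 [y3 [y4 [y5 [e1 e2]]]]]] := Hrep (v - a).
    case: ha => [->|[->|[->|[->|->]]]] in e1 e2 av *.
    - by rewrite -e2; apply: (leq_trans (IHr v y1.+1 y2 y3 y4 y5 _ _)); lia.
    - by rewrite -e2; apply: (leq_trans (IHr v y1 y2.+1 y3 y4 y5 _ _)); lia.
    - by rewrite -e2; apply: (leq_trans (IHr v y1 y2 y3.+1 y4 y5 _ _)); lia.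
    - by rewrite -e2; apply: (leq_trans (IHr v y1 y2 y3 y4.+1 y5 _ _)); lia.
    - by rewrite -e2; apply: (leq_trans (IHr v y1 y2 y3 y4 y5.+1 _ _)); lia.
  have [a [y1 [y2 [y3 [y4 [y5 [ha [ew' em]]]]]]]] : exists a y1 y2 y3 y4 y5,
      (a = 1 \/ a = c2 \/ a = c3 \/ a = c4 \/ a = c5) /\
      w = a + (y1 + c2 * y2 + c3 * y3 + c4 * y4 + c5 * y5) /\
      x1 + x2 + x3 + x4 + x5 = (y1 + y2 + y3 + y4 + y5).+1.
    clear Hlt; case: x5 ew => [|x5] ew.
      case: x4 ew => [|x4] ew.
        case: x3 ew => [|x3] ew.
          case: x2 ew => [|x2] ew.
            case: x1 ew => [|x1] ew; first by lia.
            by exists 1, x1, 0, 0, 0, 0; split; lia.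
          by exists c2, x1, x2, 0, 0, 0; split; lia.
        by exists c3, x1, x2, x3, 0, 0; split; lia.
      by exists c4, x1, x2, x3, x4, 0; split; lia.
    by exists c5, x1, x2, x3, x4, x5; split; lia.
  move: Hlt; rewrite em => Hlt.
  set V := y1 + c2 * y2 + c3 * y3 + c4 * y4 + c5 * y5 in ew'.
  set S := y1 + y2 + y3 + y4 + y5 in Hlt.
  have a1 : 1 <= a by case: ha => [->|[->|[->|[->|->]]]]; lia.
  have a5 : a <= c5 by case: ha => [->|[->|[->|[->|->]]]]; lia.
  have F2 : H V <= S by apply: (IHr V y1 y2 y3 y4 y5) => //; lia.
  have Frep b : (b = 1 \/ b = c2 \/ b = c3 \/ b = c4 \/ b = c5 \/ b = c6) ->
      G (V + b) <= S.+1.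
    by move=> hb; have := addG y1 y2 y3 y4 y5 0 b hb; rewrite muln0 !addn0.
  have ha6 : hide (a = 1 \/ a = c2 \/ a = c3 \/ a = c4 \/ a = c5 \/ a = c6).
    by rewrite /hide; lia.
  have {}ha : hide (a = 1 \/ a = c2 \/ a = c3 \/ a = c4 \/ a = c5) by [].
  have Fc5 : a <> c5.
    move=> ac5; move: Hlt; rewrite (HS5 w); last by lia.
    have -> : w - c5 = V by lia.
    by lia.
  have S2 : c6 <= w.
    rewrite leqNgt; apply/negP => w6.
    have := Frep a ha6; rewrite addnC -ew' GL // => hG.
    by lia.
  have S3 : w < a + c5.
    rewrite ltnNge; apply/negP => aw.
    have e1 : H V = (H (V - c5)).+1 by apply: HS5; lia.
    have e2 := Hsub (w - c5) a ha ltac:(lia) ltac:(lia).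
    rewrite (_ : w - c5 - a = V - c5) in e2; last by lia.
    move: Hlt; rewrite (HS5 w); last by lia.
    by lia.
  have Key : G (w + (c5 - c4)) = H w.
    rewrite GS; last by lia.
    rewrite GL; last by lia.
    have -> : w + (c5 - c4) - c6 = w - c5 by lia.
    by rewrite (HS5 w) //; lia.
  have Fnd b : (b = 1 \/ b = c2 \/ b = c3 \/ b = c4 \/ b = c5 \/ b = c6) ->
      b = a + (c5 - c4) -> False.
    move=> hb eb; have := Frep b hb.
    have -> : V + b = w + (c5 - c4) by lia.
    by rewrite Key; move: Hlt; rewrite leqNgt => /negP.
  have S5 : V < c4.
    rewrite ltnNge; apply/negP => V4.
    have e1 := Gsub (w + (c5 - c4)) a ha6 ltac:(lia).
    rewrite Key in e1.
    rewrite (_ : w + (c5 - c4) - a = V + (c5 - c4)) in e1; last by lia.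
    rewrite GL in e1; last by lia.
    rewrite (HS5 (V + (c5 - c4))) in e1; last by lia.
    rewrite (_ : V + (c5 - c4) - c5 = V - c4) in e1; last by lia.
    have e3 : H V = (H (V - c4)).+1.
      rewrite HL5; last by lia.
      rewrite H4S; last by lia.
      by rewrite HL5 //; lia.
    by lia.
  have a4 : a <> c4.
    by move=> a4; apply: (Fnd c5); lia.
  case: (ltnP (2 * c4) c5) => c45.
    by case: ha => [ha|[ha|[ha|[ha|ha]]]]; lia.
  have ce : G (c4 + c5) <= 2 by apply: (canG 0 0 0 1 1 0); lia.
  rewrite GS in ce; last by lia.
  rewrite GL in ce; last by lia.
  have he : hide _ := H1char (c4 + c5 - c6) ltac:(lia) ltac:(lia).
  have ae : a <> c4 + c5 - c6.
    move=> ae; apply: (Fnd c4); lia.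
  case: (ltnP (c4 + c5 - c6) (c5 - c4)) => ed.
    by case: ha => [ha|[ha|[ha|[ha|ha]]]]; case: he => he; lia.
  have cf : G (c4 + c4) <= 2 by apply: (canG 0 0 0 2 0 0); lia.
  rewrite GS in cf; last by lia.
  rewrite GL in cf; last by lia.
  have hf : hide _ := H1char (c4 + c4 - c6) ltac:(lia) ltac:(lia).
  have af : a <> c4 + c4 - c6.
    move=> af; apply: (Fnd (c4 + c5 - c6)); last by lia.
    by case: he => he; lia.
  by case: ha => [ha|[ha|[ha|[ha|ha]]]]; case: he => he; case: hf => hf; lia.
move=> w [w0 [x [sx [ex lt]]]].
case: x sx ex lt => [|x1 [|x2 [|x3 [|x4 [|x5 [|]]]]]] //= _.
rewrite /rep_value /rep_coins /= !big_ord_recr big_ord0 /= => ex.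
have := main w x1 x2 x3 x4 x5 ltac:(lia) w0.
rewrite /H => h; rewrite leqNgt => /negP; apply.
by move: h; rewrite /grd /=; lia.
Qed.
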